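(* Let $I=[a,b]$ be a compact interval, $P,\tilde P:I\to\mathbb{R}^{n\times m}$ continuous with $\mathrm{rank}(P(s))=n$ for all $s\in I$, and $\Omega=c+G\mathbf{B}_p$ with $c\in\mathbb{R}^m$, $G\in\mathbb{R}^{m\times p}$, $\mathrm{rank}(G)=m$. Put $P_d(s)=\tilde P(s)-P(s)$ and assume $\sup_{s\in I}\|P_d(s)c\|\le\inf_{s\in I}\|P(s)G\|_l$. Then $$\Bigl(\int_I\tilde P(s)\,\mathrm{d}s\Bigr)(c+\alpha G\mathbf{B}_p)\subseteq\int_IP(s)\Omega\,\mathrm{d}s$$ for every $\alpha\in[0,\gamma_m]$, where $$\gamma_m=\frac{\inf_{s\in I}\|P(s)G\|_l-\sup_{s\in I}\|P_d(s)c\|}{\inf_{s\in I}\|P(s)G\|_l+\sup_{s\in I}\|P_d(s)G\|}.$$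
   Context: A norm $\|\cdot\|$ is fixed on each $\mathbb{R}^k$, $\mathbf{B}_k$ is its closed unit ball, and matrices carry induced operator norms. For $M\in\mathbb{R}^{n\times m}\setminus\{0\}$, $\|M\|_l=\max\{\mu\in\mathbb{R}:\ \forall y\in\mathrm{col}(M)\ \exists x \text{ with } Mx=y,\ \mu\|x\|\le\|y\|\}$. Set-valued integral: $\int_IF(s)W\,\mathrm{d}s=\bigcup_w\int_IF(s)w(s)\,\mathrm{d}s$, the union over all Lebesgue measurable $w:I\to W$. *)

(* Defs.v *)
From HB Require Import structures.
From mathcomp Require Import all_boot all_order all_algebra.
From mathcomp Require Import all_classical all_reals all_analysis.
Set Implicit Arguments. Unset Strict Implicit. Unset Printing Implicit Defensive.
Import Order.TTheory GRing.Theory Num.Theory.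
Import numFieldNormedType.Exports.
Local Open Scope classical_set_scope.
Local Open Scope ring_scope.

Definition is_norm (R : realType) (k : nat) (N : 'cV[R]_k -> R) : Prop :=
  [/\ forall x y, N (x + y) <= N x + N y,
      forall (a : R) x, N (a *: x) = `|a| * N x
    & forall x, N x = 0 -> x = 0].

Definition cball (R : realType) (nrm : forall k, 'cV[R]_k -> R) (k : nat)
  : set 'cV[R]_k := [set x | nrm k x <= 1].
Arguments cball {R} nrm k.

Definition opnorm (R : realType) (nrm : forall k, 'cV[R]_k -> R) (n m : nat)
  (M : 'M[R]_(n, m)) : R :=
  sup [set nrm n (M *m x) | x in cball nrm m].

(* ||M||_l = max { mu | forall y in col(M), exists x, M x = y /\ mu ||x|| <= ||y|| },
   written as the supremum of that set (the max exists). *)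
Definition lnorm (R : realType) (nrm : forall k, 'cV[R]_k -> R) (n m : nat)
  (M : 'M[R]_(n, m)) : R :=
  sup [set mu : R | forall y : 'cV[R]_n, (exists z, y = M *m z) ->
          exists x : 'cV[R]_m, M *m x = y /\ mu * nrm m x <= nrm n y].

Definition mx_int (R : realType) (n m : nat) (a b : R) (P : R -> 'M[R]_(n, m))
  : 'M[R]_(n, m) :=
  \matrix_(i, j) Rintegral (@lebesgue_measure R) `[a, b]%classic (fun s => P s i j).

Definition setint (R : realType) (n m : nat) (a b : R) (P : R -> 'M[R]_(n, m))
  (W : set 'cV[R]_m) : set 'cV[R]_n :=
  [set y | exists w : R -> 'cV[R]_m,
     [/\ forall j, measurable_fun `[a, b]%classic%classic (fun s => w s j 0),
         forall s, `[a, b]%classic s -> W (w s)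
       & y = \col_i Rintegral (@lebesgue_measure R) `[a, b]
                              (fun s => (P s *m w s) i 0)]].

(* Main.v *)
Require Import Defs.
From HB Require Import structures.
From mathcomp Require Import all_boot all_order all_algebra.
From mathcomp Require Import all_classical all_reals all_analysis.
From mathcomp Require Import ring lra.
From mathcomp Require Import measurable_realfun.
Set Implicit Arguments. Unset Strict Implicit. Unset Printing Implicit Defensive.
Import Order.TTheory GRing.Theory Num.Theory.
Import numFieldNormedType.Exports.
Local Open Scope classical_set_scope.
Local Open Scope ring_scope.

Section Aux.
Variable R : realType.

Lemma closed_preimage (T U : topologicalType) (f : T -> U) (B : set U) :
  continuous f -> closed B -> closed (f @^-1` B).
Proof.
move=> cf cB; rewrite -[B]setCK -preimage_setC; apply: open_closedC.
by apply: (proj1 (continuousP f) cf); exact: closed_openC.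
Qed.


Definition clamp (a b s : R) := Num.max a (Num.min s b).

Lemma clampI (a b : R) s : a <= b -> `[a, b]%classic (clamp a b s).
Proof.
move=> ab; rewrite /= in_itv /= /clamp; apply/andP; split; first by rewrite le_max lexx.
by rewrite ge_max ab ge_min lexx orbT.
Qed.

Lemma clamp_id (a b : R) s : `[a, b]%classic s -> clamp a b s = s.
Proof.
rewrite /= in_itv /= => /andP[h1 h2]; rewrite /clamp.
by rewrite (min_idPl h2) (max_idPr h1).
Qed.

Lemma clamp_cont (a b : R) : continuous (clamp a b).
Proof.
move=> x; apply: (@continuous_max _ _ (fun=> a) (fun s => Num.min s b)).
  exact: cvg_cst.
apply: (@continuous_min _ _ id (fun=> b)); [exact: cvg_id | exact: cvg_cst].
Qed.

Lemma within_clamp (a b : R) (f : R -> R) : a <= b ->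
  {within `[a, b]%classic, continuous f} -> continuous (fun s => f (clamp a b s)).
Proof.
move=> ab cf x.
have Ix := clampI x ab.
have h := (proj1 (subspace_continuousP `[a, b]%classic f) cf) _ Ix.
apply: (cvg_comp (clamp a b) f _ h).
move=> U hU.
have h2 := @clamp_cont a b x _ hU.
have h3 : nbhs x (fun y => `[a, b]%classic (clamp a b y) -> U (clamp a b y)) := h2.
have h4 : nbhs x (fun y => U (clamp a b y)).
  by apply: filterS h3 => y hy; exact: hy (clampI y ab).
exact: h4.
Qed.


Lemma mx_entry_le k l (A : 'M[R]_(k,l)) i j : `|A i j| <= `|A|.
Proof.
rewrite [leRHS]/Num.Def.normr /= mx_normrE; apply/bigmax_geP; right; by exists (i, j).
Qed.

Lemma mx_norm_leP k l (A : 'M[R]_(k,l)) B : 0 <= B -> (forall i j, `|A i j| <= B) -> `|A| <= B.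
Proof.
move=> B0 h; rewrite [leLHS]/Num.Def.normr /= mx_normrE;
apply/bigmax_leP; split => // -[i j] _; exact: h.
Qed.

Lemma mx_norm_mul k l q (A : 'M[R]_(k,l)) (B : 'M[R]_(l,q)) :
  `|A *m B| <= l%:R * (`|A| * `|B|).
Proof.
apply: mx_norm_leP => [|i j].
  by apply: mulr_ge0; [exact: ler0n | apply: mulr_ge0].
rewrite mxE; apply: le_trans (ler_norm_sum _ _ _) _.
have -> : l%:R * (`|A| * `|B|) = \sum_(t < l) (`|A| * `|B|).
  by rewrite sumr_const card_ord mulr_natl.
apply: ler_sum => t _; rewrite normrM.
by apply: ler_pM => //; exact: mx_entry_le.
Qed.

Lemma le_sum_nn (J : finType) (F : J -> R) j : (forall i, 0 <= F i) -> F j <= \sum_i F i.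
Proof.
move=> h; rewrite (bigD1 j) //= lerDl; apply: sumr_ge0 => i _; exact: h.
Qed.

Lemma bnd_within (a b : R) (f : R -> R) : {within `[a, b]%classic, continuous f} ->
  exists K, forall s, `[a, b]%classic s -> `|f s| <= K.
Proof.
move=> cf.
have [M [_ hM]] := compact_bounded (continuous_compact cf (@segment_compact _ a b)).
exists (M + 1) => s Is; apply: (hM (M + 1)); first by rewrite ltrDl.
by exists s.
Qed.

Lemma bnd_mx k l (a b : R) (F : R -> 'M[R]_(k,l)) :
  (forall i j, {within `[a, b]%classic, continuous (fun s => F s i j)}) ->
  exists K, forall s, `[a, b]%classic s -> `|F s| <= K.
Proof.
move=> hF.
have /choice [K hK] : forall ij : 'I_k * 'I_l, exists K,
    forall s, `[a, b]%classic s -> `|F s ij.1 ij.2| <= K.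
  by move=> [i j]; exact: bnd_within.
exists (\sum_ij `|K ij|) => s Is; apply: mx_norm_leP => [|i j].
  by apply: sumr_ge0 => ij _; exact: normr_ge0.
apply: le_trans (hK (i, j) s Is) _; apply: le_trans (ler_norm _) _.
exact: (@le_sum_nn _ (fun ij => `|K ij|) (i, j)).
Qed.

Definition mxcont (T : topologicalType) k l (F : T -> 'M[R]_(k,l)) :=
  forall i j, continuous (fun s => F s i j).

Lemma mxcont_mulr (T : topologicalType) k l q (F : T -> 'M[R]_(k,l)) (A : 'M[R]_(l,q)) :
  mxcont F -> mxcont (fun s => F s *m A).
Proof.
move=> hF i j; under eq_fun do rewrite mxE.
apply: (continuous_big add_continuous) => t _ x.
apply: (@continuousM _ _ (fun s => F s i t) (fun=> A t j)); [exact: hF | exact: cvg_cst].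
Qed.

Lemma mxcont_add (T : topologicalType) k l (F G : T -> 'M[R]_(k,l)) :
  mxcont F -> mxcont G -> mxcont (fun s => F s + G s).
Proof.
move=> hF hG i j; under eq_fun do rewrite mxE.
move=> x; apply: (@continuousD _ _ _ (fun s => F s i j) (fun s => G s i j)); [exact: hF | exact: hG].
Qed.

Lemma mxcont_opp (T : topologicalType) k l (F : T -> 'M[R]_(k,l)) :
  mxcont F -> mxcont (fun s => - F s).
Proof.
move=> hF i j; under eq_fun do rewrite mxE.
move=> x; apply: (@continuousN _ _ _ (fun s => F s i j)); exact: hF.
Qed.

Lemma mxcont_scale (T : topologicalType) k l (r : R) (F : T -> 'M[R]_(k,l)) :
  mxcont F -> mxcont (fun s => r *: F s).
Proof.
move=> hF i j; under eq_fun do rewrite mxE.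
move=> x; apply: (@continuousM _ _ (fun=> r) (fun s => F s i j)); [exact: cvg_cst | exact: hF].
Qed.

Lemma Rint_sum (D : set R) (mD : measurable D) (J : Type) (r : seq J) (f : J -> R -> R) :
  (forall j, (@lebesgue_measure R).-integrable D (EFin \o f j)) ->
  (@lebesgue_measure R).-integrable D (EFin \o (fun x => \sum_(j <- r) f j x)) /\
  \int[@lebesgue_measure R]_(x in D) (\sum_(j <- r) f j x) =
    \sum_(j <- r) \int[@lebesgue_measure R]_(x in D) f j x.
Proof.
move=> hf; elim: r => [|j r [IH1 IH2]].
  rewrite big_nil; under eq_fun do rewrite big_nil.
  split; first exact: integrable0.
  by rewrite Rintegral_cst // mul0r.
under eq_fun do rewrite big_cons.
rewrite big_cons RintegralD // IH2; split => //.
rewrite (_ : EFin \o _ = (EFin \o f j) \+ (EFin \o (fun x => (\sum_(j0 <- r) f j0 x)%R)))%E; last by [].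
by apply: integrableD.
Qed.

End Aux.

Section Norms.
Variable R : realType.
Local Notation mx_entry_le := (@mx_entry_le R).
Local Notation mx_norm_leP := (@mx_norm_leP R).
Local Notation closed_preimage := closed_preimage.

Definition isN k l (N : 'M[R]_(k,l) -> R) :=
  [/\ forall x y, N (x + y) <= N x + N y,
      forall (a : R) x, N (a *: x) = `|a| * N x
    & forall x, N x = 0 -> x = 0].

Lemma is_norm_isN k (N : 'cV[R]_k -> R) : is_norm N -> isN N.
Proof. by []. Qed.

Lemma isN_tr k (N : 'cV[R]_k -> R) : isN N -> isN (fun v : 'rV[R]_k => N v^T).
Proof.
case=> h1 h2 h3; split.
- by move=> x y; rewrite linearD.
- by move=> a x; rewrite linearZ /=; exact: h2.
- by move=> x /h3 /eqP; rewrite trmx_eq0 => /eqP.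
Qed.

Section N.
Variables (k l : nat) (N : 'M[R]_(k,l) -> R) (hN : isN N).

Lemma N0 : N 0 = 0.
Proof. by case: hN => _ h _; have := h 0 0; rewrite scale0r normr0 mul0r. Qed.

Lemma NZ a x : N (a *: x) = `|a| * N x.
Proof. by case: hN. Qed.

Lemma ND x y : N (x + y) <= N x + N y.
Proof. by case: hN. Qed.

Lemma NN x : N (- x) = N x.
Proof. by rewrite -scaleN1r NZ normrN normr1 mul1r. Qed.

Lemma N_ge0 x : 0 <= N x.
Proof.
have := ND x (- x); rewrite subrr N0 NN -mulr2n => h.
by rewrite -(pmulrn_lge0 _ (ltn0Sn 1)).
Qed.

Lemma N_eq0 x : N x = 0 -> x = 0.
Proof. by case: hN => _ _ h /h. Qed.

Lemma N_sum (I : Type) (r : seq I) (F : I -> 'M[R]_(k,l)) :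
  N (\sum_(i <- r) F i) <= \sum_(i <- r) N (F i).
Proof.
elim: r => [|i r IH]; first by rewrite !big_nil N0.
rewrite !big_cons; apply: le_trans (ND _ _) _; exact: lerD.
Qed.

Lemma Nlip x y : `|N x - N y| <= N (x - y).
Proof.
have h1 : N y <= N (y - x) + N x by rewrite -{1}(subrK x y); exact: ND.
have h2 : N x <= N (x - y) + N y by rewrite -{1}(subrK y x); exact: ND.
have h3 : N (y - x) = N (x - y) by rewrite -opprB NN.
rewrite h3 in h1; rewrite ler_norml; apply/andP; split; lra.
Qed.

Lemma N_ub : exists C, 0 <= C /\ forall x, N x <= C * `|x|.
Proof.
exists (\sum_i \sum_j N (delta_mx i j)); split.
  by apply: sumr_ge0 => i _; apply: sumr_ge0 => j _; exact: N_ge0.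
move=> x; rewrite {1}(matrix_sum_delta x).
have h := N_sum (index_enum 'I_k) (fun i => \sum_(j < l) x i j *: delta_mx i j).
apply: le_trans h _; rewrite mulr_suml; apply: ler_sum => i _.
have h := N_sum (index_enum 'I_l) (fun j => x i j *: delta_mx i j).
apply: le_trans h _; rewrite mulr_suml; apply: ler_sum => j _.
by rewrite NZ mulrC ler_wpM2l ?N_ge0 ?mx_entry_le.
Qed.

Lemma N_cont : continuous N.
Proof.
have [C [C0 hC]] := N_ub.
move=> x; apply/(@cvgrPdist_lt _ _ _ _ (nbhs_filter x)) => e e0.
have e1 : 0 < e / (C + 1) by rewrite divr_gt0 // ltr_wpDl.
near=> y.
apply: le_lt_trans (Nlip _ _) _; apply: le_lt_trans (hC _) _.
have h1 : C * `|x - y| <= (C + 1) * `|x - y| by rewrite ler_wpM2r ?normr_ge0 ?lerDl.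
apply: le_lt_trans h1 _; rewrite mulrC -ltr_pdivlMr; last by rewrite ltr_wpDl.
near: y.
exact: (@cvgr_dist_lt _ _ _ _ (nbhs_filter x) _ _ (@cvg_id _ (nbhs x))).
Unshelve. all: by end_near. Qed.

End N.

Lemma N_lb k (N : 'rV[R]_k -> R) (hN : isN N) :
  exists c, 0 < c /\ forall x, `|x| <= c * N x.
Proof.
case: k N hN => [|k] N hN.
  exists 1; split => // x; rewrite mul1r; apply: le_trans (N_ge0 hN x).
  by apply: mx_norm_leP => // i [].
pose v1 : 'rV[R]_k.+1 := const_mx 1.
have v1n : `|v1| != 0.
  rewrite normr_eq0; apply/eqP => /matrixP /(_ ord0 ord0); rewrite !mxE => /eqP.
  by rewrite oner_eq0.
pose S := [set v : 'rV[R]_k.+1 | `|v| = 1].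
have S0 : S !=set0.
  exists (`|v1|^-1 *: v1); rewrite /S /= normrZ normfV normr_id mulVf //.
have cS : compact S.
  apply: bounded_closed_compact.
    rewrite /= /bounded_near; near=> M; move=> v /= ->; near: M; apply: nbhs_pinfty_ge; exact: num_real.
  exact: closed_preimage (@norm_continuous _ _) (@closed_eq _ _).
have [v0 /set_mem Sv0 hv0] := compact_EVT_min S0 cS (continuous_subspaceT (N_cont hN)).
have Nv0 : 0 < N v0.
  rewrite lt_def N_ge0 // andbT; apply/eqP => /(N_eq0 hN) v00.
  by move: Sv0; rewrite /S /= v00 normr0 => /esym/eqP; rewrite oner_eq0.
exists (N v0)^-1; split; first by rewrite invr_gt0.
move=> x; have [->|x0] := eqVneq x 0; first by rewrite normr0 N0 // mulr0.
have xn : 0 < `|x| by rewrite normr_gt0.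
have : N v0 <= N (`|x|^-1 *: x).
  apply: hv0; apply/mem_set; rewrite /S /= normrZ normfV normr_id mulVf //.
  by rewrite normr_eq0.
rewrite NZ // normfV normr_id => h; rewrite ler_pdivlMl // in h.
by rewrite ler_pdivlMl // mulrC.
Unshelve. all: by end_near.
Qed.

End Norms.

Section Sel.
Variable R : realType.

Variable p : nat.
Definition esq (x : 'rV[R]_p) : R := \sum_j x ord0 j ^+ 2.

Lemma esq_ge0 x : 0 <= esq x.
Proof. by apply: sumr_ge0 => j _; exact: sqr_ge0. Qed.

Lemma esq_eq0 x : esq x = 0 -> x = 0.
Proof.
move=> /eqP; rewrite psumr_eq0 => [/allP h|j _]; last exact: sqr_ge0.
apply/matrixP => i j; rewrite !ord1 mxE; apply/eqP.
by rewrite -sqrf_eq0; apply: h; rewrite mem_index_enum.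
Qed.

Lemma esq_mid x y : esq (2^-1 *: (x + y)) * 4 + esq (x - y) = 2 * esq x + 2 * esq y.
Proof.
rewrite /esq mulr_suml -big_split /= !mulr_sumr -big_split /=.
apply: eq_bigr => j _; rewrite !mxE; by field.
Qed.

Lemma esq_cont : continuous esq.
Proof.
rewrite /esq; apply: (continuous_big add_continuous) => j _.
move=> x; apply: (@continuous_comp _ _ _ (fun v : 'rV[R]_p => v ord0 j) (fun r : R => r ^+ 2) x).
  exact: coord_continuous.
exact: exprn_continuous.
Qed.

Variables (I : set R) (Fs : R -> 'rV[R]_p -> Prop) (B : R).
Hypotheses (cI : compact I)
  (cG : closed [set sx : R * 'rV[R]_p | Fs sx.1 sx.2])
  (bF : forall s x, Fs s x -> `|x| <= B)
  (mF : forall s x y, Fs s x -> Fs s y -> Fs s (2^-1 *: (x + y)))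
  (nF : forall s, I s -> exists x, Fs s x).

Let Gr := [set sx : R * 'rV[R]_p | Fs sx.1 sx.2].

Lemma fiber_closed s : closed [set x | Fs s x].
Proof.
have -> : [set x | Fs s x] = (fun x => (s, x)) @^-1` Gr by [].
apply: closed_preimage cG => x.
exact: (@cvg_pair _ _ _ (nbhs x) (nbhs s) (nbhs x) (nbhs_filter x) (nbhs_filter s) (nbhs_filter x) (fun _ => s) id (cvg_cst s) cvg_id).
Qed.

Lemma ballB_compact : compact [set x : 'rV[R]_p | `|x| <= B].
Proof.
apply: bounded_closed_compact.
  rewrite /= /bounded_near; near=> M; move=> v /= h.
  apply: le_trans h _; near: M; apply: nbhs_pinfty_ge; exact: num_real.
exact: closed_preimage (@norm_continuous _ _) (@closed_le _ _).
Unshelve. all: by end_near.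
Qed.

Lemma fiber_compact s : compact [set x | Fs s x].
Proof.
have -> : [set x | Fs s x] = [set x | `|x| <= B] `&` [set x | Fs s x].
  by apply/seteqP; split => [x Fx|x []//]; split => //; exact: bF Fx.
exact: compact_closedI ballB_compact (@fiber_closed s).
Qed.

Definition ismin s x := Fs s x /\ forall y, Fs s y -> esq x <= esq y.

Lemma ismin_ex s : I s -> exists x, ismin s x.
Proof.
move=> Is; have [x0 Fx0] := nF Is.
have ne : [set x | Fs s x] !=set0 by exists x0.
have [c /set_mem Fc hc] := compact_EVT_min ne (@fiber_compact s)
  (continuous_subspaceT esq_cont).
by exists c; split => // y Fy; apply: hc; exact/mem_set.
Qed.

Lemma ismin_uniq s x y : ismin s x -> ismin s y -> x = y.
Proof.
move=> [Fx hx] [Fy hy].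
have h1 := hx _ (mF Fx Fy).
have exy : esq x = esq y by apply/le_anti; rewrite hx // hy.
have h2 := esq_mid x y.
have h3 : esq (x - y) <= 0 by rewrite -exy in h2; lra.
have h4 := esq_ge0 (x - y).
have /esq_eq0 /eqP : esq (x - y) = 0 by apply/le_anti; rewrite h3 h4.
by rewrite subr_eq0 => /eqP.
Qed.

Definition zsel s := xget 0 (ismin s).

Lemma zsel_min s : I s -> ismin s (zsel s).
Proof. by move=> Is; apply: xgetPex; exact: ismin_ex. Qed.

Definition Aset (C : set 'rV[R]_p) (q : R) :=
  [set s | I s /\ exists x, Fs s x /\ C x /\ esq x <= q].

Lemma Aset_closed C q : closed C -> closed (Aset C q).
Proof.
move=> cC.
pose K := (I `*` [set x : 'rV[R]_p | `|x| <= B]) `&`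
  (Gr `&` (snd @^-1` (C `&` [set x | esq x <= q]))).
have cK : compact K.
  apply: compact_closedI; first exact: compact_setX cI ballB_compact.
  apply: closedI => //; apply: closed_preimage.
    by move=> x; exact: cvg_snd.
  apply: closedI => //; apply: closed_preimage esq_cont (@closed_le _ _).
have -> : Aset C q = fst @` K.
  apply/seteqP; split.
    move=> s [Is [x [Fx [Cx ex]]]]; exists (s, x) => //.
    by split; [split => //; exact: bF Fx|split].
  by move=> _ [[s x] [[/= Is _] [/= Fx [Cx ex]]] <-]; split => //; exists x.
apply: compact_closed; first exact: Rhausdorff.
apply: continuous_compact cK; apply: continuous_subspaceT => x.
exact: cvg_fst.
Qed.

Lemma zsel_meas j : measurable_fun I (fun s => zsel s ord0 j).
Proof.
apply: (measurability _ (RGenCInfty.measurableE R)).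
move=> _ [_ [t ->] <-].
pose C := [set x : 'rV[R]_p | t <= x ord0 j].
have cC : closed C.
  exact: (closed_preimage (@coord_continuous R 1 p ord0 j) (@closed_ge R t)).
have -> : I `&` (fun s => zsel s ord0 j) @^-1` `[t, +oo[ =
    I `&` \bigcap_(q : rat) (~` Aset setT (ratr q) `|` Aset C (ratr q)).
  apply/seteqP; split => s [Is h]; split => //.
    move=> q _ /=.
    have [hA|hA] := pselect (Aset setT (ratr q) s); last by left.
    right; case: hA => _ [x [Fx [_ ex]]]; split => //.
    have [Fz hz] := zsel_min Is.
    exists (zsel s); split => //; split; last exact: le_trans (hz _ Fx) ex.
    by move: h; rewrite /= in_itv /= andbT.
  rewrite /= in_itv /= andbT leNgt; apply/negP => hlt.
  have [Fz hz] := zsel_min Is.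
  have [u [mu hu]] : exists u, esq (zsel s) < u /\
      forall x, Fs s x -> C x -> u <= esq x.
    have [[x0 [F0 C0]]|hn] := pselect (exists x, Fs s x /\ C x).
      have ne : [set x | Fs s x] `&` C !=set0 by exists x0.
      have [y /set_mem [Fy Cy] hy] := compact_EVT_min ne
        (compact_closedI (@fiber_compact s) cC) (continuous_subspaceT esq_cont).
      exists (esq y); split; last first.
        by move=> x Fx Cx; apply: hy; apply/mem_set.
      rewrite ltNge; apply/negP => hle.
      have hmin : ismin s y.
        by split => // w Fw; apply: le_trans hle (hz _ Fw).
      have := ismin_uniq hmin (zsel_min Is) => eyz.
      by move: Cy; rewrite /C /= eyz leNgt hlt.
    exists (esq (zsel s) + 1); split; first by rewrite ltrDl.
    by move=> x Fx Cx; exfalso; apply: hn; exists x.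
  have [q] := rat_in_itvoo mu; rewrite in_itv /= => /andP[q1 q2].
  case: (h q Logic.I) => [hA|[_ [x [Fx [Cx ex]]]]].
    by apply: hA; split => //; exists (zsel s); split => //; split => //; exact: ltW.
  have := hu _ Fx Cx; rewrite leNgt => /negP; apply.
  exact: le_lt_trans ex q2.
apply: measurableI; first exact: compact_measurable.
rewrite -[X in measurable X]setCK setC_bigcap; apply: measurableC.
apply: bigcupT_measurable_rat => q; apply: measurableC.
apply: measurableU; first apply: measurableC.
  by apply: closed_measurable; apply: Aset_closed; exact: closedT.
by apply: closed_measurable; exact: Aset_closed.
Qed.

Lemma selection : exists z : R -> 'rV[R]_p,
  (forall s, I s -> Fs s (z s)) /\ forall j, measurable_fun I (fun s => z s ord0 j).
Proof.
exists zsel; split => [s Is|j]; [exact: (zsel_min Is).1 | exact: zsel_meas].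
Qed.
End Sel.

Unset Implicit Arguments.
Section Gen.
Variable R : realType.
Variable nrm : forall k, 'cV[R]_k -> R.
Hypothesis hnrm : forall k, is_norm (nrm k).
Let hN (k : nat) : isN (nrm k) := hnrm k.

Lemma tr_norm_le k (x : 'cV[R]_k) : `|x| <= `|x^T|.
Proof.
apply: mx_norm_leP => // i j; have := mx_entry_le x^T j i; by rewrite mxE.
Qed.

Lemma lnorm_ge0 n p (M : 'M[R]_(n,p)) : 0 <= lnorm nrm M.
Proof.
rewrite /lnorm.
set S := [set mu : R | _].
have [hs|hs] := pselect (has_sup S); last by rewrite sup_out.
apply: (sup_upper_bound hs) => y [z ->]; exists z; split => //.
by rewrite mul0r; exact: N_ge0.
Qed.

Lemma closed_eq_fun (T : topologicalType) k (f : T -> 'cV[R]_k) :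
  (forall i, continuous (fun t => f t i 0)) -> closed [set t | f t = 0].
Proof.
move=> hf.
have -> : [set t | f t = 0] = (fun t => \sum_i `|f t i 0|) @^-1` [set 0].
  apply/seteqP; split => t /=.
    by move=> ->; apply: big1 => i _; rewrite mxE normr0.
  move=> /eqP; rewrite psumr_eq0 => [/allP h|i _]; last exact: normr_ge0.
  apply/matrixP => i j; rewrite ord1 mxE; apply/eqP; rewrite -normr_eq0.
  by apply: h; rewrite mem_index_enum.
apply: closed_preimage; last exact: closed_eq.
apply: (continuous_big add_continuous) => i _ x.
exact: (continuous_comp (hf i x) (@norm_continuous _ _ _)).
Qed.

Lemma lin_cont k l (M : 'M[R]_(k,l)) i : continuous (fun v : 'rV[R]_l => (M *m v^T) i 0).
Proof.
have -> : (fun v : 'rV[R]_l => (M *m v^T) i 0) = (fun v => \sum_t M i t * v ord0 t).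
  by apply/funext => v; rewrite mxE; apply: eq_bigr => t _; rewrite mxE.
apply: (continuous_big add_continuous) => t _ x.
apply: (@continuousM _ _ (fun=> M i t) (fun v : 'rV[R]_l => v ord0 t)).
  exact: cst_continuous.
exact: coord_continuous.
Qed.

Lemma lnorm_attain n p (M : 'M[R]_(n,p)) (q : 'cV[R]_n) (L : R) :
  0 < L -> L <= lnorm nrm M -> (exists z, q = M *m z) ->
  exists x, M *m x = q /\ L * nrm p x <= nrm n q.
Proof.
move=> L0 hL hq.
pose S := [set mu : R | forall y : 'cV[R]_n, (exists z, y = M *m z) ->
          exists x : 'cV[R]_p, M *m x = y /\ mu * nrm p x <= nrm n y].
have eS : lnorm nrm M = sup S by [].
have hS : has_sup S.
  case: (pselect (has_sup S)) => // hs; exfalso.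
  by move: hL; rewrite eS (sup_out hs) => hL; lra.
have hmu : forall mu, mu < L -> exists x, M *m x = q /\ mu * nrm p x <= nrm n q.
  move=> mu hmu; have e0 : 0 < sup S - mu by rewrite -eS; lra.
  have [mu' Smu' hlt] := sup_adherent e0 hS.
  have [x [hx1 hx2]] := Smu' q hq; exists x; split => //.
  apply: le_trans hx2; apply: ler_wpM2r; first exact: N_ge0.
  lra.
have Ng := N_ge0 (hN p).
have Nq := N_ge0 (hN n) q.
pose Rr := nrm n q * 2 / L.
have inK : forall x, M *m x = q -> L / 2 * nrm p x <= nrm n q -> nrm p x <= Rr.
  move=> x _ hx; rewrite /Rr ler_pdivlMr //; nra.
pose K := [set v : 'rV[R]_p | M *m v^T = q /\ nrm p v^T <= Rr].
have [x1 [hx1 hx1']] := hmu (L / 2) ltac:(lra).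
have K0 : K !=set0 by exists x1^T; rewrite /K /= trmxK; split => //; exact: inK.
have [cp [cp0 hcp]] := N_lb (isN_tr (hN p)).
have cK : compact K.
  apply: bounded_closed_compact.
    rewrite /= /bounded_near; near=> B; move=> v /= [_ hv].
    apply: le_trans (hcp v) _; apply: le_trans (ler_wpM2l (ltW cp0) hv) _.
    near: B; apply: nbhs_pinfty_ge; exact: num_real.
  have -> : K = [set v | M *m v^T - q = 0] `&` ((fun v : 'rV[R]_p => nrm p v^T) @^-1` [set r | r <= Rr]).
    apply/seteqP; split => v /= [h1 h2]; split => //.
      by rewrite h1 subrr.
    by apply/eqP; rewrite -subr_eq0 h1.
  apply: closedI.
    apply: closed_eq_fun => i.
    have -> : (fun t : 'rV[R]_p => (M *m t^T - q) i 0) =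
              (fun t => (M *m t^T) i 0 - q i 0).
      by apply/funext => t; rewrite !mxE.
    move=> x; apply: continuousB; [exact: lin_cont | exact: cst_continuous].
  apply: closed_preimage; last exact: closed_le.
  exact: N_cont (isN_tr (hN p)).
have [xs /set_mem [Kxs1 Kxs2] hxs] := compact_EVT_min K0 cK
  (continuous_subspaceT (N_cont (isN_tr (hN p)))).
exists xs^T; split => //.
apply/ler_addgt0Pr => e e0.
set X := nrm p xs^T; set Y := nrm n q.
have X0 : 0 <= X by exact: Ng.
pose d := Num.min (L / 2) (e / (X + 1)).
have d1 : d <= L / 2 by rewrite /d ge_min lexx.
have d2 : d <= e / (X + 1) by rewrite /d ge_min lexx orbT.
have d0 : 0 < d by rewrite /d lt_min; apply/andP; split; [lra | rewrite divr_gt0 //; lra].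
have d3 : d * (X + 1) <= e by rewrite -ler_pdivlMr //; lra.
have [x [hx hx']] := hmu (L - d) ltac:(lra).
have hxK : X <= nrm p x.
  have := hxs x^T; rewrite trmxK; apply; apply/mem_set; rewrite /K /= trmxK; split => //.
  apply: inK => //; apply: le_trans hx'; apply: ler_wpM2r; [exact: Ng | lra].
have h1 : (L - d) * X <= Y.
  apply: le_trans hx'; apply: ler_wpM2l => //; lra.
nra.
Unshelve. all: by end_near.
Qed.

End Gen.
Set Implicit Arguments.

Unset Implicit Arguments.
Lemma zmod_helper (V : zmodType) (x y w : V) : x + (y + (w - (x + y))) = w.
Proof. by rewrite addrA addrC subrK. Qed.

Theorem lemma8 (R : realType) (nrm : forall k, 'cV[R]_k -> R)
  (hnrm : forall k, is_norm (nrm k))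
  (n m p : nat) (a b : R) (hab : a <= b)
  (P Pt : R -> 'M[R]_(n, m))
  (hP : forall i j, {within `[a, b]%classic, continuous (fun s => P s i j)})
  (hPt : forall i j, {within `[a, b]%classic, continuous (fun s => Pt s i j)})
  (hrk : forall s, a <= s <= b -> \rank (P s) = n)
  (c : 'cV[R]_m) (G : 'M[R]_(m, p)) (hG : \rank G = m) :
  let Pd := fun s => Pt s - P s in
  let L := inf [set lnorm nrm (P s *m G) | s in `[a, b]%classic] in
  let D := sup [set nrm n (Pd s *m c) | s in `[a, b]%classic] in
  let E := sup [set opnorm nrm (Pd s *m G) | s in `[a, b]%classic] in
  let Omega := [set c + G *m z | z in cball nrm p] in
  D <= L ->
  forall alpha : R, 0 <= alpha <= (L - D) / (L + E) ->
  [set mx_int a b Pt *m (c + alpha *: (G *m z)) | z in cball nrm p]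
    `<=` setint a b P Omega.
Proof.
move=> Pd L D E Omega hDL alpha /andP[al0 alL] _ [z hz <-].
have hN : forall k, isN (nrm k) := hnrm.
have Ia : `[a, b]%classic a by rewrite /= in_itv /= lexx hab.
have cI : compact `[a, b]%classic := @segment_compact _ a b.
have [Cn [Cn0 hCn]] := N_ub (hN n).
have [cp [cp0 hcp]] := N_lb (isN_tr (hN p)).
have hcpc : forall x : 'cV[R]_p, `|x| <= cp * nrm p x.
  by move=> x; apply: le_trans (tr_norm_le _ _ x) _; have := hcp x^T; rewrite trmxK.
have [KP hKP] := bnd_mx hP.
have [KPt hKPt] := bnd_mx hPt.
have hKPd : forall s, `[a, b]%classic s -> `|Pd s| <= KP + KPt.
  move=> s Is; rewrite /Pd; apply: le_trans (ler_normB _ _) _; rewrite addrC.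
  by apply: lerD; [exact: hKP | exact: hKPt].
have Nge0 : forall k (x : 'cV[R]_k), 0 <= nrm k x by move=> k x; exact: N_ge0 (hN k) x.
have Nz0 : forall k, nrm k 0 = 0 by move=> k; exact: N0 (hN k).
have KP0 : 0 <= KP by apply: le_trans (hKP a Ia); exact: normr_ge0.
have KPt0 : 0 <= KPt by apply: le_trans (hKPt a Ia); exact: normr_ge0.
have hMx : forall (Y : 'M[R]_(n,p)) x, cball nrm p x ->
    nrm n (Y *m x) <= Cn * (p%:R * (`|Y| * cp)).
  move=> Y x hx; apply: le_trans (hCn _) _; apply: ler_wpM2l => //.
  apply: le_trans (mx_norm_mul _ _) _; apply: ler_wpM2l; first exact: ler0n.
  apply: ler_wpM2l; first exact: normr_ge0.
  apply: le_trans (hcpc x) _; rewrite -[leRHS]mulr1; apply: ler_wpM2l => //.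
  exact: ltW.
have op_hs : forall Y : 'M[R]_(n,p), has_sup [set nrm n (Y *m x) | x in cball nrm p].
  move=> Y; split.
    exists (nrm n (Y *m 0)), 0 => //; rewrite /cball /= Nz0; exact: ler01.
  by exists (Cn * (p%:R * (`|Y| * cp))) => _ [x hx <-]; exact: hMx.
have op_ge : forall (Y : 'M[R]_(n,p)) x, cball nrm p x -> nrm n (Y *m x) <= opnorm nrm Y.
  by move=> Y x hx; apply: (sup_upper_bound (op_hs Y)); exists x.
have op_le : forall Y : 'M[R]_(n,p), opnorm nrm Y <= Cn * (p%:R * (`|Y| * cp)).
  move=> Y; rewrite /opnorm; apply: (ge_sup (op_hs Y).1).
  by move=> _ [x hx <-]; exact: hMx.
have E_hs : has_sup [set opnorm nrm (Pd s *m G) | s in `[a, b]%classic].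
  split; first by exists (opnorm nrm (Pd a *m G)), a.
  exists (Cn * (p%:R * ((m%:R * ((KP + KPt) * `|G|)) * cp))) => _ [s Is <-].
  apply: le_trans (op_le _) _; apply: ler_wpM2l => //; apply: ler_wpM2l; first exact: ler0n.
  apply: ler_wpM2r; first exact: ltW.
  apply: le_trans (mx_norm_mul _ _) _; apply: ler_wpM2l; first exact: ler0n.
  apply: ler_wpM2r; [exact: normr_ge0 | exact: hKPd].
have hE : forall s, `[a, b]%classic s -> opnorm nrm (Pd s *m G) <= E.
  by move=> s Is; apply: (sup_upper_bound E_hs); exists s.
have D_hs : has_sup [set nrm n (Pd s *m c) | s in `[a, b]%classic].
  split; first by exists (nrm n (Pd a *m c)), a.
  exists (Cn * (m%:R * ((KP + KPt) * `|c|))) => _ [s Is <-].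
  apply: le_trans (hCn _) _; apply: ler_wpM2l => //.
  apply: le_trans (mx_norm_mul _ _) _; apply: ler_wpM2l; first exact: ler0n.
  apply: ler_wpM2r; [exact: normr_ge0 | exact: hKPd].
have hD : forall s, `[a, b]%classic s -> nrm n (Pd s *m c) <= D.
  by move=> s Is; apply: (sup_upper_bound D_hs); exists s.
have D0 : 0 <= D by apply: le_trans (hD a Ia); exact: Nge0.
have E0 : 0 <= E.
  apply: le_trans (hE a Ia); apply: le_trans (op_ge (Pd a *m G) 0 _).
    by rewrite mulmx0 Nz0.
  by rewrite /cball /= Nz0; exact: ler01.
have L_hl : has_lbound [set lnorm nrm (P s *m G) | s in `[a, b]%classic].
  by exists 0 => _ [s _ <-]; exact: (lnorm_ge0 _ _ hnrm).
have L_lb : forall s, `[a, b]%classic s -> L <= lnorm nrm (P s *m G).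
  by move=> s Is; apply: (ge_inf L_hl); exists s.
have L0 : 0 <= L.
  apply: lb_le_inf; first by exists (lnorm nrm (P a *m G)), a.
  by move=> _ [s _ <-]; exact: (lnorm_ge0 _ _ hnrm).
pose u := c + alpha *: (G *m z).
pose r := fun s => alpha *: ((P s *m G) *m z) + Pd s *m u.
have feas : forall s, `[a, b]%classic s ->
    exists x : 'cV[R]_p, nrm p x <= 1 /\ (P s *m G) *m x = r s.
  move=> s Is.
  have eq_q : Pd s *m u = Pd s *m c + alpha *: ((Pd s *m G) *m z).
    by rewrite /u mulmxDr -scalemxAr mulmxA.
  have hq : nrm n (Pd s *m u) <= D + alpha * E.
    rewrite eq_q; apply: le_trans (ND (hN n) _ _) _.
    rewrite (NZ (hN n)) ger0_norm //; apply: lerD; first exact: hD.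
    apply: ler_wpM2l => //; apply: le_trans (hE s Is); exact: op_ge.
  have [Lz|Lnz] := eqVneq L 0.
    have Dz : D = 0 by apply/le_anti; rewrite D0 andbT -Lz.
    have a0 : alpha = 0.
      by apply/le_anti; rewrite al0 andbT; move: alL; rewrite Lz Dz subrr mul0r.
    have hc0 : Pd s *m c = 0.
      apply: (N_eq0 (hN n)); apply/le_anti; rewrite Nge0 andbT -Dz; exact: hD.
    exists 0; split; first by rewrite Nz0; exact: ler01.
    by rewrite mulmx0 /r /u a0 !scale0r addr0 add0r hc0.
  have Lp : 0 < L by rewrite lt_def Lnz L0.
  have Is' : a <= s <= b by move: Is; rewrite /= in_itv.
  have fr : row_free (P s *m G).
    by rewrite /row_free mxrankMfree ?hrk // /row_free hG.
  have [Bi hBi] := row_freeP fr.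
  have hcol : exists z0, Pd s *m u = (P s *m G) *m z0.
    by exists (Bi *m (Pd s *m u)); rewrite mulmxA hBi mul1mx.
  have [x0 [hx0 hLx0]] := lnorm_attain R nrm hnrm n p (P s *m G) (Pd s *m u) L Lp
    (L_lb s Is) hcol.
  exists (alpha *: z + x0); split; last first.
    by rewrite mulmxDr -scalemxAr hx0.
  have alL' : alpha * (L + E) <= L - D.
    by rewrite -ler_pdivlMr; [exact: alL | lra].
  have hz1 : nrm p z <= 1 := hz.
  apply: le_trans (ND (hN p) _ _) _; rewrite (NZ (hN p)) ger0_norm //.
  have h1 : alpha * nrm p z <= alpha by rewrite -[leRHS]mulr1; apply: ler_wpM2l.
  have h2 : L * (alpha + nrm p x0) <= L * 1 by nra.
  rewrite ler_pM2l // in h2; lra.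
pose cl := clamp a b.
pose Mc := fun s => P (cl s) *m G.
pose rc := fun s => r (cl s).
pose Fs := fun s (v : 'rV[R]_p) => nrm p v^T <= 1 /\ Mc s *m v^T = rc s.
have cPc : mxcont (fun s => P (cl s)) by move=> i j; exact: within_clamp hab (hP i j).
have cPtc : mxcont (fun s => Pt (cl s)) by move=> i j; exact: within_clamp hab (hPt i j).
have cMc : mxcont Mc by exact: mxcont_mulr cPc.
have crc : mxcont rc.
  apply: mxcont_add; first by apply: mxcont_scale; exact: mxcont_mulr.
  by apply: mxcont_mulr; apply: mxcont_add => //; exact: mxcont_opp.
have cG : closed [set sx : R * 'rV[R]_p | Fs sx.1 sx.2].
  have -> : [set sx : R * 'rV[R]_p | Fs sx.1 sx.2] =
      ((fun sx : R * 'rV[R]_p => nrm p sx.2^T) @^-1` [set t | t <= 1]) `&`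
      [set sx | Mc sx.1 *m sx.2^T - rc sx.1 = 0].
    apply/seteqP; split => sx /= [h1 h2]; split => //.
      by rewrite h2 subrr.
    by apply/eqP; rewrite -subr_eq0 h2.
  apply: closedI.
    apply: closed_preimage; last exact: closed_le.
    move=> sx; apply: (@continuous_comp _ _ _ snd (fun v : 'rV[R]_p => nrm p v^T)).
      exact: cvg_snd.
    exact: (@N_cont R 1 p _ (isN_tr (hN p)) sx.2).
  apply: closed_eq_fun => i.
  have -> : (fun sx : R * 'rV[R]_p => (Mc sx.1 *m sx.2^T - rc sx.1) i 0) =
      (fun sx => \sum_k Mc sx.1 i k * sx.2 ord0 k - rc sx.1 i 0).
    apply/funext => sx; rewrite [LHS]mxE [X in _ + X]mxE [X in X + _]mxE.
    by congr (_ - _); apply: eq_bigr => k _; rewrite [(_^T) k 0]mxE.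
  move=> sx; apply: continuousB.
    apply: (continuous_big add_continuous) => k _ sx'.
    apply: (@continuousM _ _ (fun sx : R * 'rV[R]_p => Mc sx.1 i k) (fun sx => sx.2 ord0 k)).
      apply: (@continuous_comp _ _ _ fst (fun s => Mc s i k)); first exact: cvg_fst.
      exact: cMc.
    apply: (@continuous_comp _ _ _ snd (fun v : 'rV[R]_p => v ord0 k)); first exact: cvg_snd.
    exact: coord_continuous.
  apply: (@continuous_comp _ _ _ fst (fun s => rc s i 0)); first exact: cvg_fst.
  exact: crc.
have bF : forall s x, Fs s x -> `|x| <= cp.
  move=> s x [h1 _]; apply: le_trans (hcp x) _.
  by rewrite -[leRHS]mulr1; apply: ler_wpM2l => //; exact: ltW.
have mF : forall s x y, Fs s x -> Fs s y -> Fs s (2^-1 *: (x + y)).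
  move=> s x y [hx1 hx2] [hy1 hy2]; split.
    rewrite linearZ /= linearD /= (NZ (hN p)) ger0_norm; last by rewrite invr_ge0.
    apply: le_trans (ler_wpM2l _ (ND (hN p) _ _)) _; first by rewrite invr_ge0.
    lra.
  rewrite linearZ /= linearD /= -scalemxAr mulmxDr hx2 hy2.
  rewrite scalerDr -scalerDl.
  have -> : (2:R)^-1 + 2^-1 = 1 by lra.
  by rewrite scale1r.
have nF : forall s, `[a, b]%classic s -> exists x, Fs s x.
  move=> s Is; have [x [hx1 hx2]] := feas s Is.
  exists x^T; rewrite /Fs trmxK /Mc /rc /cl clamp_id //; split => //.
have [zeta [hzF hzm]] := selection cI cG bF mF nF.
exists (fun s => c + G *m (zeta s)^T); split.
- move=> j.
  have -> : (fun s => (c + G *m (zeta s)^T) j 0) =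
      (fun s => c j 0 + \sum_k G j k * zeta s ord0 k).
    apply/funext => s; rewrite [LHS]mxE [(G *m _) j 0]mxE.
    by congr (_ + _); apply: eq_bigr => k _; rewrite mxE.
  apply: measurable_funD; first exact: measurable_cst.
  apply: measurable_sum => k; apply: measurable_funM; first exact: measurable_cst.
  exact: hzm.
- move=> s Is; exists (zeta s)^T => //; exact: (hzF s Is).1.
- apply/matrixP => i j; rewrite ord1 {j} [RHS]mxE.
  have key : forall s, `[a, b]%classic s ->
      (P s *m (c + G *m (zeta s)^T)) i 0 = \sum_k Pt s i k * u k 0.
    move=> s Is.
    have hzs := (hzF s Is).2.
    rewrite /Mc /rc /cl clamp_id // in hzs.
    have -> : P s *m (c + G *m (zeta s)^T) = Pt s *m u.
      rewrite mulmxDr mulmxA hzs /r /Pd mulmxBl.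
      have -> : P s *m u = P s *m c + alpha *: (P s *m G *m z).
        by rewrite /u mulmxDr -scalemxAr mulmxA.
      exact: zmod_helper.
    by rewrite mxE.
  have eqI : Rintegral (@lebesgue_measure R) `[a, b]%classic
      (fun s => (P s *m (c + G *m (zeta s)^T)) i 0) =
      Rintegral (@lebesgue_measure R) `[a, b]%classic (fun s => \sum_k Pt s i k * u k 0).
    by apply: eq_Rintegral => s /set_mem Is; exact: key.
  rewrite eqI.
  have mI : measurable `[a, b]%classic by exact: measurable_itv.
  have intP : forall k, (@lebesgue_measure R).-integrable `[a, b]%classic
      (EFin \o (fun s => Pt s i k)).
    by move=> k; exact: continuous_compact_integrable cI (hPt i k).
  have intf : forall k, (@lebesgue_measure R).-integrable `[a, b]%classic
      (EFin \o (fun s => Pt s i k * u k 0)).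
    move=> k.
    have -> : EFin \o (fun s => Pt s i k * u k 0) =
        ((EFin \o (fun s => Pt s i k)) \* cst (u k 0)%:E)%E.
      by apply/funext => s /=; rewrite EFinM.
    exact: integrableZr.
  have [_ ->] := @Rint_sum R `[a, b]%classic mI 'I_m (index_enum 'I_m)
    (fun k s => Pt s i k * u k 0) intf.
  rewrite /mx_int mxE; apply: eq_bigr => k _.
  by rewrite mxE RintegralZr.
Qed.
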